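(* Let $f:\mathbf{R}^d\times A\to\mathbf{R}^d$ be bounded with $\|f(x,a)\|\le M$ for all states $x$ and actions $a\in A$, Lipschitz continuous in the state, $\|f(x,a)-f(x',a)\|\le L\|x-x'\|$, and approximately odd in the action: $f(x,-a)=-f(x,a)+\epsilon(x,a)$ with $\|\epsilon(x,a)\|\le E$ for all $x,a$. Let $\nu>0$, $T\in\mathbf{N}$, and let $x_T(0),\dots,x_T(2T)$ be generated by Euler's method $x_T(k+1)=x_T(k)+\nu f(x_T(k),a_T(k))$ with actions $a_T(0),\dots,a_T(2T-1)\in A$ satisfying $a_T(T+k)=-a_T(T-1-k)$ for $k=0,\dots,T-1$. Then $$\|x_T(0)-x_T(2T)\|\le\left(\nu M+\frac{E}{L}\right)\left[e^{TL\nu}-1\right].$$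
   Context: This models discretized teleoperation with a learned action map $f$: $x_T(k)\in\mathbf{R}^d$ is the robot state at step $k$, $a_T(k)$ the user's action (from a bounded action set $A$ closed under negation), and $\nu>0$ the update rate; $\epsilon$ is the residual error by which the map fails to be exactly odd in the action. *)

(* Defs.v *)
From mathcomp Require Import all_boot all_order all_algebra.
From mathcomp Require Import all_classical all_reals all_analysis.
Set Implicit Arguments. Unset Strict Implicit. Unset Printing Implicit Defensive.
Import Order.TTheory GRing.Theory Num.Theory.
Local Open Scope ring_scope.

Definition enorm (R : realType) (d : nat) (v : 'rV[R]_d) : R :=
  Num.sqrt (\sum_(i < d) v ord0 i ^+ 2).

(* Main.v *)
Require Import Defs.
From mathcomp Require Import all_boot all_order all_algebra.
From mathcomp Require Import all_classical all_reals all_analysis.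
From mathcomp Require Import ring lra zify.
Import Order.TTheory GRing.Theory Num.Theory.
Local Open Scope ring_scope.

Section N.
Variables (R : realType) (d : nat).

Lemma cs_sum (u v : 'I_d -> R) :
  (\sum_i u i * v i) ^+ 2 <= (\sum_i u i ^+ 2) * (\sum_i v i ^+ 2).
Proof.
have H : \sum_i \sum_j (u i * v j - u j * v i) ^+ 2 =
  2 * ((\sum_i u i ^+ 2) * (\sum_i v i ^+ 2) - (\sum_i u i * v i) ^+ 2).
  transitivity (\sum_i \sum_j (u i ^+ 2 * v j ^+ 2 + u j ^+ 2 * v i ^+ 2
     - 2 * (u i * v i * (u j * v j)))).
    by apply: eq_bigr => i _; apply: eq_bigr => j _; ring.
  have P (a b : 'I_d -> R) : (\sum_i a i) * (\sum_j b j) = \sum_i \sum_j a i * b j.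
    by rewrite mulr_suml; apply: eq_bigr => i _; rewrite mulr_sumr.
  under eq_bigr do rewrite sumrB big_split /=.
  rewrite sumrB big_split /= [X in _ + X - _]exchange_big /=.
  rewrite [(\sum_i u i * v i) ^+ 2]expr2 !P mulrBr mulrDl mul1r.
  congr (_ + _ - _); rewrite mulr_sumr; apply: eq_bigr => i _;
    rewrite ?mulr_sumr; apply: eq_bigr => j _; ring.
have : 0 <= \sum_i \sum_j (u i * v j - u j * v i) ^+ 2.
  by apply: sumr_ge0 => i _; apply: sumr_ge0 => j _; apply: sqr_ge0.
rewrite H; lra.
Qed.

Lemma enorm_ge0 (v : 'rV[R]_d) : 0 <= enorm v.
Proof. exact: sqrtr_ge0. Qed.

Lemma enormD (u v : 'rV[R]_d) : enorm (u + v) <= enorm u + enorm v.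
Proof.
rewrite /enorm.
set a := \sum_i u ord0 i ^+ 2; set b := \sum_i v ord0 i ^+ 2.
have a0 : 0 <= a by apply: sumr_ge0 => i _; apply: sqr_ge0.
have b0 : 0 <= b by apply: sumr_ge0 => i _; apply: sqr_ge0.
have -> : \sum_i (u + v) ord0 i ^+ 2 = a + b + 2 * \sum_i u ord0 i * v ord0 i.
  rewrite /a /b -big_split mulr_sumr -big_split /=; apply: eq_bigr => i _.
  rewrite !mxE; ring.
have hc : \sum_i u ord0 i * v ord0 i <= Num.sqrt a * Num.sqrt b.
  rewrite -sqrtrM //; apply: le_trans (ler_norm _) _.
  rewrite -sqrtr_sqr; apply: ler_wsqrtr; exact: cs_sum.
rewrite -[X in _ <= X]ger0_norm ?addr_ge0 ?sqrtr_ge0 // -sqrtr_sqr.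
apply: ler_wsqrtr.
rewrite sqrrD !sqr_sqrtr //; lra.
Qed.

Lemma enormZ (c : R) (v : 'rV[R]_d) : enorm (c *: v) = `|c| * enorm v.
Proof.
rewrite /enorm.
have -> : \sum_i (c *: v) ord0 i ^+ 2 = c ^+ 2 * \sum_i v ord0 i ^+ 2.
  by rewrite mulr_sumr; apply: eq_bigr => i _; rewrite !mxE exprMn.
by rewrite sqrtrM ?sqr_ge0 // sqrtr_sqr.
Qed.

Lemma enormN (v : 'rV[R]_d) : enorm (- v) = enorm v.
Proof. by rewrite -scaleN1r enormZ normrN normr1 mul1r. Qed.

Lemma enorm0 : enorm (0 : 'rV[R]_d) = 0.
Proof. by rewrite -(scale0r (0 : 'rV[R]_d)) enormZ normr0 mul0r. Qed.

Lemma enormB (u v : 'rV[R]_d) : enorm (u - v) = enorm (v - u).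
Proof. by rewrite -enormN opprB. Qed.
End N.
Arguments enorm_ge0 {R d}. Arguments enormD {R d}. Arguments enormZ {R d}. Arguments enormN {R d}. Arguments enorm0 {R d}. Arguments enormB {R d}.

Theorem corollary1 (R : realType) (d m : nat)
  (A : 'rV[R]_m -> Prop) (f : 'rV[R]_d -> 'rV[R]_m -> 'rV[R]_d)
  (eps : 'rV[R]_d -> 'rV[R]_m -> 'rV[R]_d) (M L E nu : R) (T : nat)
  (x : nat -> 'rV[R]_d) (a : nat -> 'rV[R]_m) :
  (* action set: bounded and closed under negation *)
  (exists B : R, forall u, A u -> enorm u <= B) ->
  (forall u, A u -> A (- u)) ->
  (* f bounded, Lipschitz in the state, approximately odd in the action *)
  (forall y u, A u -> enorm (f y u) <= M) ->
  0 < L ->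
  (forall y y' u, A u -> enorm (f y u - f y' u) <= L * enorm (y - y')) ->
  (forall y u, A u -> f y (- u) = - f y u + eps y u) ->
  (forall y u, A u -> enorm (eps y u) <= E) ->
  0 < nu ->
  (* actions and Euler scheme *)
  (forall k, (k < 2 * T)%N -> A (a k)) ->
  (forall k, (k < 2 * T)%N -> x k.+1 = x k + nu *: f (x k) (a k)) ->
  (forall k, (k < T)%N -> a (T + k)%N = - a (T - 1 - k)%N) ->
  enorm (x 0%N - x (2 * T)%N) <= (nu * M + E / L) * (expR (T%:R * L * nu) - 1).
Proof.
move=> _ _ HM L0 HL Hodd HE nu0 HA Hx Ha.
case: (posnP T) => [->|T0].
  by rewrite muln0 subrr enorm0 mul0r mul0r expR0 subrr mulr0.
have M0 : 0 <= M.
  by apply: le_trans (enorm_ge0 _) (HM (x 0%N) (a 0%N) (HA 0%N _)); lia.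
have E0 : 0 <= E.
  by apply: le_trans (enorm_ge0 _) (HE (x 0%N) (a 0%N) (HA 0%N _)); lia.
set K := nu * M + E / L.
have K0 : 0 <= K by rewrite /K; apply: addr_ge0; [apply: mulr_ge0 | apply: divr_ge0]; rewrite // ltW.
have KL : K * L = nu * M * L + E.
  by rewrite /K mulrDl divfK // gt_eqF.
set q := 1 + nu * L.
have claim : forall k, (k <= T)%N ->
    enorm (x (T + k)%N - x (T - k)%N) <= K * (q ^+ k - 1).
  elim=> [|k IH] hk.
    by rewrite addn0 subn0 subrr enorm0 expr0 subrr mulr0.
  have hk' : (k <= T)%N by lia.
  have {}IH := IH hk'.
  set j := (T - k.+1)%N.
  have hj : (j < 2 * T)%N by rewrite /j; lia.
  have e1 : (T - k = j.+1)%N by rewrite /j; lia.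
  have e2 : (T + k.+1 = (T + k).+1)%N by lia.
  have e3 : (T - 1 - k = j)%N by rewrite /j; lia.
  have xj1 : x (T - k)%N = x j + nu *: f (x j) (a j) by rewrite e1 Hx.
  have Aj := HA j hj.
  rewrite -/j e2 Hx; last by lia.
  rewrite Ha; last by lia.
  rewrite e3 Hodd //.
  have -> : x (T + k)%N + nu *: (- f (x (T + k)%N) (a j) + eps (x (T + k)%N) (a j)) - x j
     = (x (T + k)%N - x (T - k)%N) + nu *: (f (x j) (a j) - f (x (T + k)%N) (a j))
       + nu *: eps (x (T + k)%N) (a j).
    by rewrite xj1; apply/matrixP => i0 i; rewrite !mxE; ring.
  set ek := enorm (x (T + k)%N - x (T - k)%N).
  have h1 : enorm (f (x j) (a j) - f (x (T + k)%N) (a j)) <= L * (nu * M + ek).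
    apply: le_trans (HL _ _ _ Aj) _; rewrite (ler_wpM2l (ltW L0)) //.
    have -> : x j - x (T + k)%N = (x j - x (T - k)%N) + (x (T - k)%N - x (T + k)%N).
      by rewrite addrA subrK.
    apply: le_trans (enormD _ _) _; apply: lerD.
      rewrite xj1 opprD addrA subrr add0r enormN enormZ (ger0_norm (ltW nu0)).
      by rewrite (ler_wpM2l (ltW nu0)) //; exact: HM.
    by rewrite enormB.
  have h2 := HE (x (T + k)%N) (a j) Aj.
  apply: le_trans (enormD _ _) _.
  rewrite enormZ (ger0_norm (ltW nu0)).
  apply: le_trans (lerD (enormD _ _) (lexx _)) _.
  rewrite enormZ (ger0_norm (ltW nu0)) -/ek.
  have h3 : nu * enorm (f (x j) (a j) - f (x (T + k)%N) (a j)) <= nu * (L * (nu * M + ek)).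
    by rewrite (ler_wpM2l (ltW nu0)).
  have h4 : nu * enorm (eps (x (T + k)%N) (a j)) <= nu * E by rewrite (ler_wpM2l (ltW nu0)).
  have nL0 : 0 <= nu * L by rewrite mulr_ge0 ?ltW.
  have h5 : nu * L * ek <= nu * L * (K * (q ^+ k - 1)) by rewrite ler_wpM2l.
  rewrite exprS.
  have h6 : nu * (nu * M * L + E) = nu * (K * L) by rewrite KL.
  rewrite /q in h5 IH *; rewrite -/ek in IH; move: ((1 + nu * L) ^+ k) h5 IH => Q h5 IH.
  lra.
have := claim T (leqnn T).
rewrite subnn addnn -mul2n enormB => H.
apply: le_trans H _.
rewrite ler_wpM2l // lerB //.
have -> : T%:R * L * nu = T%:R * (nu * L) by ring.
rewrite expRM_natl; apply: lerXn2r.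
- rewrite qualifE /q; apply: addr_ge0 => //; apply: mulr_ge0; exact: ltW.
- by rewrite qualifE /= expR_ge0.
- exact: expR_ge1Dx.
Qed.
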